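(* Let $N_1,N_2,N_3$ be negators such that $G=\operatorname{NNN}(N_1,N_2,N_3)$ is a bicritical snark. Then each of $N_1,N_2,N_3$ is a bicritical negator.
   Context: A multipole consists of vertices and edges; each edge has two ends, each either at a vertex or free (a semiedge); all multipoles are cubic. A colouring of a multipole (or graph) is an assignment of three colours to edges such that the three edge ends at each vertex get distinct colours. A snark is a connected cubic graph with no colouring. For distinct vertices $x,y$ of a graph $G$, $G-\{x,y\}$ denotes the multipole obtained by deleting $x$ and $y$ (edges formerly joining them to other vertices become dangling edges; an edge $xy$, if present, is kept as an isolated edge). A snark $G$ is bicritical if $G-\{x,y\}$ is colourable for every two distinct vertices $x,y$. Negator: for a snark $H$ and a path $uwv$ in $H$, $\operatorname{Neg}(H;u,v)$ is the $(2,2,1)$-pole $N(I,O,r)$ obtained by deleting $u,w,v$, with $I$ the two semiedges formerly at $u$, $O$ the two formerly at $v$, $r$ the one formerly at $w$. A negator $N=\operatorname{Neg}(H;u,v)$ is bicritical if $H-\{x,y\}$ is colourable for every two distinct vertices $x,y\in V(N)$. For negators $N_j(I_j,O_j,r_j)$, $j=1,2,3$, the cubic graph $\operatorname{NNN}(N_1,N_2,N_3)$ is obtained by performing the junctions (identifying free ends in pairs along arbitrary bijections) of $O_1$ with $I_2$, $O_2$ with $I_3$, $O_3$ with $I_1$, and adding one new vertex incident with the three residual semiedges $r_1,r_2,r_3$. *)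

(* Defs.v *)
(* Cubic (multi)graphs are encoded by their edge ends
   ("darts"): a vertex x of a cubic graph on the finite vertex type V owns
   the three ends (x,0), (x,1), (x,2); the edge structure is a pairing
   p : V * 'I_3 -> V * 'I_3 sending each end to the other end of its edge
   (a fixed-point-free involution). Parallel edges and loops are allowed. *)
From mathcomp Require Import all_boot.

Set Implicit Arguments.
Unset Strict Implicit.
Unset Printing Implicit Defensive.

Section Graphs.
Variable V : finType.
Implicit Type p : V * 'I_3 -> V * 'I_3.

Definition is_cubic p := involutive p /\ (forall d, p d != d).

Definition adj p : rel V := fun x y => [exists i, exists j, p (x, i) == (y, j)].

Definition connected p := forall x y : V, connect (adj p) x y.

(* The multipole G - S obtained from the cubic graph (V,p) by deleting the
   vertices of S: the ends formerly at deleted vertices become free ends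
   (so edges to deleted vertices become dangling edges and edges between
   deleted vertices become isolated edges). *)
Definition is_colouring_without p (S : {set V}) (c : V * 'I_3 -> 'I_3) :=
  (forall d, c (p d) = c d) /\
  (forall x, x \notin S -> injective (fun i : 'I_3 => c (x, i))).

Definition colourable_without p (S : {set V}) :=
  exists c, is_colouring_without p S c.

Definition colourable p := colourable_without p set0.

Definition snark p := [/\ is_cubic p, connected p & ~ colourable p].

Definition bicritical p :=
  snark p /\ forall x y : V, x != y -> colourable_without p [set x; y].
End Graphs.

(* Data of a negator Neg(H;u,v): the graph H together with the path u w v. *)
Record negator := Negator {
  nV : finType;
  np : nV * 'I_3 -> nV * 'I_3;
  nu : nV; nw : nV; nv : nV }.
Arguments np : clear implicits.
Arguments nu : clear implicits.
Arguments nw : clear implicits.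
Arguments nv : clear implicits.

Definition in_neg (N : negator) (x : nV N) := x \notin [:: nu N; nw N; nv N].

Definition surv (N : negator) : finType := {x : nV N | in_neg x}.

(* the semiedges of the negator formerly at a (a = u gives I, a = v gives O,
   a = w gives r): ends at vertices of N whose partner end was at a. *)
Definition semiedges_at (N : negator) (a : nV N) : {set nV N * 'I_3} :=
  [set d | in_neg d.1 && ((np N d).1 == a)].

Definition is_negator (N : negator) :=
  snark (np N) /\
  [/\ uniq [:: nu N; nw N; nv N], adj (np N) (nu N) (nw N) & adj (np N) (nw N) (nv N)] /\
  [/\ #|semiedges_at (nu N)| = 2, #|semiedges_at (nv N)| = 2
    & #|semiedges_at (nw N)| = 1].

Definition bicritical_negator (N : negator) :=
  forall x y : nV N, in_neg x -> in_neg y -> x != y ->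
    colourable_without (np N) [set x; y].

Definition nnnV (N1 N2 N3 : negator) : finType :=
  (surv N1 + surv N2 + surv N3 + unit)%type.

Definition inj1 {N1 N2 N3 : negator} (s : surv N1) : nnnV N1 N2 N3 := inl (inl (inl s)).
Definition inj2 {N1 N2 N3 : negator} (s : surv N2) : nnnV N1 N2 N3 := inl (inl (inr s)).
Definition inj3 {N1 N2 N3 : negator} (s : surv N3) : nnnV N1 N2 N3 := inl (inr s).
Definition znew {N1 N2 N3 : negator} : nnnV N1 N2 N3 := inr tt.

(* Edges of the NNN graph issuing from the negator N (with predecessor Np and
   successor Nn in the cyclic order): edges inside N are kept; the O-semiedges
   of N are joined with I-semiedges of Nn, the I-semiedges of N with
   O-semiedges of Np, and the r-semiedge of N goes to the new vertex z. *)
Definition NNN_side (N Np Nn : negator) (GV : finType)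
  (pG : GV * 'I_3 -> GV * 'I_3)
  (inj : surv N -> GV) (injp : surv Np -> GV) (injn : surv Nn -> GV) (z : GV) :=
  forall (s : surv N) (i : 'I_3),
    let e := np N (val s, i) in
    [/\ forall t : surv N, val t = e.1 -> pG (inj s, i) = (inj t, e.2),
        e.1 = nv N -> exists t j, (np Nn (val t, j)).1 = nu Nn /\ pG (inj s, i) = (injn t, j),
        e.1 = nu N -> exists t j, (np Np (val t, j)).1 = nv Np /\ pG (inj s, i) = (injp t, j)
      & e.1 = nw N -> exists k, pG (inj s, i) = (z, k)].

(* pG is the edge structure of NNN(N1,N2,N3) for some choice of the
   bijections used in the junctions (and some labelling of the ends at z). *)
Definition is_NNN (N1 N2 N3 : negator)
  (pG : nnnV N1 N2 N3 * 'I_3 -> nnnV N1 N2 N3 * 'I_3) :=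
  [/\ is_cubic pG,
      NNN_side pG inj1 inj3 inj2 znew,
      NNN_side pG inj2 inj1 inj3 znew,
      NNN_side pG inj3 inj2 inj1 znew
    & forall k : 'I_3,
        [\/ exists s i, (np N1 (val s, i)).1 = nw N1 /\ pG (znew, k) = (inj1 s, i),
            exists s i, (np N2 (val s, i)).1 = nw N2 /\ pG (znew, k) = (inj2 s, i)
          | exists s i, (np N3 (val s, i)).1 = nw N3 /\ pG (znew, k) = (inj3 s, i)]].

(* Main.v *)
Require Import Defs.
From mathcomp Require Import all_boot.
Set Implicit Arguments.
Unset Strict Implicit.
Unset Printing Implicit Defensive.

Definition c0 : 'I_3 := @Ordinal 3 0 isT.
Definition c1 : 'I_3 := @Ordinal 3 1 isT.
Definition c2 : 'I_3 := @Ordinal 3 2 isT.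
Lemma I3cases (a : 'I_3) : a = c0 \/ a = c1 \/ a = c2.
Proof. case: a => [[|[|[|m]]] H]; try by [left; apply: val_inj|right;left;apply: val_inj|right;right;apply: val_inj]. Qed.
Definition pk (k : 'I_3) (s : seq 'I_3) := odd (count_mem k s).
Definition par (s : seq 'I_3) := (pk c0 s == pk c1 s) && (pk c1 s == pk c2 s).
Ltac cs a := case: (I3cases a) => [->|[->|->]].
Ltac dummy := idtac.
Lemma F1 a b c d e : par [:: a; b; c; d; e] -> a != b -> c != d ->
  exists al be, [/\ al != a, al != b, be != c, be != d & [/\ al != be, al != e & be != e]].
Proof.
cs a; cs b; cs c; cs d; cs e => //= _ _ _;
 first [ by exists c0, c0 | by exists c0, c1 | by exists c0, c2 | by exists c1, c0 | by exists c1, c1 | by exists c1, c2 | by exists c2, c0 | by exists c2, c1 | by exists c2, c2 ].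
Qed.
Lemma F2 a b c d e : par [:: a; b; c; d; e] -> ~~ ((a == b) && (c == d)).
Proof. by cs a; cs b; cs c; cs d; cs e. Qed.
Lemma F3 (e1 e2 e3 k : 'I_3) : e1 != e2 -> e1 != e3 -> e2 != e3 -> (e1 == k) (+) (e2 == k) (+) (e3 == k).
Proof. by cs e1; cs e2; cs e3; cs k. Qed.
Lemma pk5 (k a b c d e : 'I_3) : pk k [:: a; b; c; d; e] =
  ((a == k) (+) (b == k)) (+) ((c == k) (+) (d == k)) (+) (e == k).
Proof. by rewrite /pk /= !oddD !oddb addbF !addbA. Qed.
Lemma pairb (a b c d : 'I_3) k : ((a = c /\ b = d) \/ (a = d /\ b = c)) ->
  (a == k) (+) (b == k) = (c == k) (+) (d == k).
Proof. by case=> [[-> ->]|[-> ->]] //; rewrite addbC. Qed.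
Lemma paireq (a b c d : 'I_3) : ((a = c /\ b = d) \/ (a = d /\ b = c)) -> (a == b) = (c == d).
Proof. by case=> [[-> ->]|[-> ->]] //; rewrite eq_sym. Qed.

Lemma chain a1 b1 x1 y1 e1 a2 b2 x2 y2 e2 a3 b3 x3 y3 e3 :
 ((x1 = a2 /\ y1 = b2) \/ (x1 = b2 /\ y1 = a2)) ->
 ((x2 = a3 /\ y2 = b3) \/ (x2 = b3 /\ y2 = a3)) ->
 ((x3 = a1 /\ y3 = b1) \/ (x3 = b1 /\ y3 = a1)) ->
 e1 != e2 -> e1 != e3 -> e2 != e3 ->
 par [:: a2; b2; x2; y2; e2] -> par [:: a3; b3; x3; y3; e3] -> par [:: a1; b1; x1; y1; e1].
Proof.
move=> h1 h2 h3 d12 d13 d23.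
have key : forall k, pk k [:: a1; b1; x1; y1; e1] =
   ~~ (pk k [:: a2; b2; x2; y2; e2] (+) pk k [:: a3; b3; x3; y3; e3]).
  move=> k; rewrite !pk5 (pairb k h1) (pairb k h2) (pairb k h3).
  have := F3 k d12 d13 d23.
  move: (a1 == k) (b1 == k) (a2 == k) (b2 == k) (a3 == k) (b3 == k) (e1 == k) (e2 == k) (e3 == k).
  by do 9! case.
rewrite /par !key => /andP[/eqP -> /eqP ->] /andP[/eqP -> /eqP ->].
by rewrite !eqxx.
Qed.
Lemma even_inv (T : finType) (f : T -> T) (D : {set T}) :
  involutive f -> (forall d, f d != d) -> (forall d, d \in D -> f d \in D) -> ~~ odd #|D|.
Proof.
move=> finv ffix fD.
pose r (d : T) : nat := enum_rank d.
have rneq : forall d, r d != r (f d).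
  move=> d; apply/eqP => /val_inj/enum_rank_inj h.
  by move: (ffix d); rewrite -h eqxx.
set B := [set d | r d < r (f d)].
have e : D :\: B = f @: (D :&: B).
  apply/setP => x; rewrite !inE; apply/idP/imsetP.
  - case/andP=> nB xD; exists (f x); last by rewrite finv.
    rewrite !inE fD // finv /=.
    by rewrite ltn_neqAle eq_sym rneq /= leqNgt.
  - case=> y; rewrite !inE => /andP[yB yD] ->.
    rewrite fD // andbT finv -leqNgt ltnW //.
rewrite -(cardsID B D) e card_imset; last exact: inv_inj.
by rewrite oddD addbb.
Qed.

Lemma parity (V : finType) (p : V * 'I_3 -> V * 'I_3) (col : V * 'I_3 -> 'I_3) (A : {set V}) :
  involutive p -> (forall d, p d != d) ->
  (forall d, d.1 \in A -> (p d).1 \in A -> col (p d) = col d) ->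
  (forall x, x \in A -> injective (fun i => col (x, i))) ->
  forall k, odd #|[set d | (d.1 \in A) && ((p d).1 \notin A) && (col d == k)]| = odd #|A|.
Proof.
move=> pinv pfix hcol hinj k.
set Dk := [set d | (d.1 \in A) && (col d == k)].
have cD : #|Dk| = #|A|.
  have -> : A = (fun d : V * 'I_3 => d.1) @: Dk.
    apply/setP => x; apply/idP/imsetP.
    - move=> xA.
      have : k \in codom (fun i => col (x, i)).
        by apply: inj_card_onto; [exact: hinj|rewrite !card_ord].
      case/codomP => i ei; exists (x, i) => //.
      by rewrite inE xA /= -ei eqxx.
    - by case=> d; rewrite inE => /andP[dA _] ->.
  symmetry; apply: card_in_imset => [[x i] [y j]]; rewrite !inE /= => /andP[xA /eqP ci] /andP[yA /eqP cj] exy.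
  subst y; congr (_, _); apply: (hinj x xA) => /=; by rewrite ci cj.
set B := [set d | (p d).1 \in A].
rewrite -cD -(cardsID B Dk) oddD.
have -> : odd #|Dk :&: B| = false.
  apply: negbTE.
  apply: (@even_inv _ p) => // d; rewrite !inE => /andP[/andP[dA /eqP cd] pdA].
  by rewrite pdA pinv dA hcol // cd eqxx.
have -> : Dk :\: B = [set d | (d.1 \in A) && ((p d).1 \notin A) && (col d == k)].
  by apply/setP => d; rewrite !inE; case: (d.1 \in A); case: ((p d).1 \in A).
by [].
Qed.
Definition tcol (N : negator) (GV : finType) (inj : surv N -> GV)
  (c : GV * 'I_3 -> 'I_3) (d : nV N * 'I_3) : 'I_3 :=
  if (insub d.1 : option (surv N)) is Some s then c (inj s, d.2) else c0.

Lemma tcolE (N : negator) (GV : finType) (inj : surv N -> GV) c x i (h : in_neg x) :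
  tcol inj c (x, i) = c (inj (exist _ x h), i).
Proof. by rewrite /tcol /= insubT. Qed.

Lemma side_int (N Np Nn : negator) (GV : finType) (pG : GV * 'I_3 -> GV * 'I_3)
  (inj : surv N -> GV) (injp : surv Np -> GV) (injn : surv Nn -> GV) (z : GV) (c : GV * 'I_3 -> 'I_3) :
  NNN_side pG inj injp injn z -> (forall d, c (pG d) = c d) ->
  forall d, in_neg d.1 -> in_neg (np N d).1 -> tcol inj c (np N d) = tcol inj c d.
Proof.
move=> side hc [x i] /= hx hy.
have [H1 _ _ _] := side (exist _ x hx) i.
case e: (np N (x, i)) hy => [y j] /= hy.
rewrite (tcolE _ _ _ hy) (tcolE _ _ _ hx).
move: H1; rewrite /= e /= => H1.
by rewrite -[RHS]hc (H1 (exist _ y hy)).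
Qed.

Lemma side_inj (N : negator) (GV : finType) (pG : GV * 'I_3 -> GV * 'I_3)
  (inj : surv N -> GV) c S x (h : in_neg x) :
  is_colouring_without pG S c -> inj (exist _ x h) \notin S ->
  injective (fun i => tcol inj c (x, i)).
Proof.
move=> [_ hc] hS i j /=; rewrite !(tcolE _ _ _ h); exact: hc.
Qed.

Lemma side_jun1 (N Np Nn : negator) (GV : finType) (pG : GV * 'I_3 -> GV * 'I_3)
  (inj : surv N -> GV) (injp : surv Np -> GV) (injn : surv Nn -> GV) (z : GV) (c : GV * 'I_3 -> 'I_3) :
  NNN_side pG inj injp injn z -> (forall d, c (pG d) = c d) ->
  forall o, o \in semiedges_at (nv N) -> exists s t j,
   [/\ val s = o.1, (val t, j) \in semiedges_at (nu Nn), pG (inj s, o.2) = (injn t, j)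
     & tcol inj c o = tcol injn c (val t, j)].
Proof.
move=> side hc [x i]; rewrite inE /= => /andP[hx /eqP hv].
have [_ H2 _ _] := side (exist _ x hx) i.
have [t [j [ht he]]] := H2 hv.
exists (exist _ x hx), t, j; split => //.
  by rewrite inE ht eqxx andbT; exact: (valP t).
rewrite (tcolE _ _ _ hx) -hc he.
by case: t {ht he} => y hy; rewrite (tcolE _ _ _ hy).
Qed.

Lemma side_jun (N Np Nn : negator) (GV : finType) (pG : GV * 'I_3 -> GV * 'I_3)
  (inj : surv N -> GV) (injp : surv Np -> GV) (injn : surv Nn -> GV) (z : GV) (c : GV * 'I_3 -> 'I_3) o1 o2 i1 i2 :
  NNN_side pG inj injp injn z -> (forall d, c (pG d) = c d) -> injective pG -> injective inj ->
  o1 \in semiedges_at (nv N) -> o2 \in semiedges_at (nv N) -> o1 != o2 ->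
  semiedges_at (nu Nn) = [set i1; i2] ->
  (tcol inj c o1 = tcol injn c i1 /\ tcol inj c o2 = tcol injn c i2) \/
  (tcol inj c o1 = tcol injn c i2 /\ tcol inj c o2 = tcol injn c i1).
Proof.
move=> side hc pinj iinj ho1 ho2 no eI.
have [s1 [t1 [j1 [vs1 m1 p1 c1]]]] := side_jun1 side hc ho1.
have [s2 [t2 [j2 [vs2 m2 p2 c2]]]] := side_jun1 side hc ho2.
have ne : (val t1, j1) != (val t2, j2).
  apply/eqP => -[/val_inj et ej]; subst t2 j2.
  move: p1; rewrite -p2 => /pinj -[/iinj es ei]; subst s2.
  by apply: (negP no); apply/eqP; rewrite [o1]surjective_pairing [o2]surjective_pairing -vs1 -vs2 ei.
rewrite c1 c2.
move: m1 m2 ne; rewrite eI !inE.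
by case/orP => /eqP ->; case/orP => /eqP ->; rewrite ?eqxx //; auto.
Qed.

Lemma side_r (N Np Nn : negator) (GV : finType) (pG : GV * 'I_3 -> GV * 'I_3)
  (inj : surv N -> GV) (injp : surv Np -> GV) (injn : surv Nn -> GV) (z : GV) (c : GV * 'I_3 -> 'I_3) :
  NNN_side pG inj injp injn z -> (forall d, c (pG d) = c d) ->
  forall r, r \in semiedges_at (nw N) -> exists s k,
   [/\ val s = r.1, pG (inj s, r.2) = (z, k) & c (z, k) = tcol inj c r].
Proof.
move=> side hc [x i]; rewrite inE /= => /andP[hx /eqP hw].
have [_ _ _ H4] := side (exist _ x hx) i.
have [k hk] := H4 hw.
exists (exist _ x hx), k; split => //.
by rewrite (tcolE _ _ _ hx) -[RHS]hc hk.
Qed.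
Lemma cover3 (t1 t2 t3 t : 'I_3) : t1 != t2 -> t1 != t3 -> t2 != t3 -> [|| t == t1, t == t2 | t == t3].
Proof. by cs t1; cs t2; cs t3; cs t. Qed.

Lemma inj3f (f : 'I_3 -> 'I_3) t1 t2 t3 : t1 != t2 -> t1 != t3 -> t2 != t3 ->
  f t1 != f t2 -> f t1 != f t3 -> f t2 != f t3 -> injective f.
Proof.
move=> n12 n13 n23 f12 f13 f23 s t.
have := cover3 s n12 n13 n23; have := cover3 t n12 n13 n23.
by do 2 (case/or3P => /eqP ->); rewrite // => /eqP; rewrite ?(negbTE f12) ?(negbTE f13) ?(negbTE f23) // eq_sym ?(negbTE f12) ?(negbTE f13) ?(negbTE f23).
Qed.

Lemma extend (N : negator) (S : {set nV N}) (col : nV N * 'I_3 -> 'I_3) i1 i2 o1 o2 r (al be : 'I_3) :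
  is_cubic (np N) -> uniq [:: nu N; nw N; nv N] -> adj (np N) (nu N) (nw N) -> adj (np N) (nw N) (nv N) ->
  semiedges_at (nu N) = [set i1; i2] -> i1 != i2 ->
  semiedges_at (nv N) = [set o1; o2] -> o1 != o2 ->
  semiedges_at (nw N) = [set r] ->
  (forall d, in_neg d.1 -> in_neg (np N d).1 -> col (np N d) = col d) ->
  (forall x, in_neg x -> x \notin S -> injective (fun i => col (x, i))) ->
  col i1 != col i2 -> col o1 != col o2 -> al != col i1 -> al != col i2 ->
  be != col o1 -> be != col o2 -> al != be -> al != col r -> be != col r ->
  colourable_without (np N) S.
Proof.
move=> [pinv pfix] U auw awv eu ni eo no ew hcol hinj ci co a1 a2 b1 b2 ab ar br.
set p := np N in pinv pfix auw awv hcol hinj *.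
set u := nu N in U auw eu *; set w := nw N in U auw awv ew *; set v := nv N in U awv eo *.
have [uw uv wv] : [/\ u != w, u != v & w != v].
  by move: U; rewrite /= !inE !negb_or => /and3P[/andP[h1 h2] h3 _]; split.
have mi : forall a d, d \in semiedges_at a -> in_neg d.1 /\ (p d).1 = a.
  by move=> a d; rewrite inE => /andP[-> /eqP].
have nin : forall x, ~~ in_neg x -> [\/ x = u, x = w | x = v].
  move=> x; rewrite /in_neg negbK !inE.
  by case/or3P => /eqP ->; [apply: Or31|apply: Or32|apply: Or33].
have nu' : ~~ in_neg u by rewrite /in_neg negbK !inE eqxx.
have nw' : ~~ in_neg w by rewrite /in_neg negbK !inE eqxx orbT.
have nv' : ~~ in_neg v by rewrite /in_neg negbK !inE eqxx !orbT.
case/existsP: auw => iu /existsP[j /eqP euw].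
case/existsP: awv => j' /existsP[k /eqP ewv].
have ewu : p (w, j) = (u, iu) by rewrite -euw pinv.
have evw : p (v, k) = (w, j') by rewrite -ewv pinv.
pose c' d := if in_neg d.1 then col d else if in_neg (p d).1 then col (p d)
             else if (d.1 == u) || ((p d).1 == u) then al else be.
have cpv : forall d, in_neg d.1 -> ~~ in_neg (p d).1 -> c' (p d) = col d.
  by move=> d h1 h2; rewrite /c' pinv (negbTE h2) h1.
have two : forall a t b d1 d2, ~~ in_neg a -> d1 \in semiedges_at a -> d2 \in semiedges_at a ->
    d1 != d2 -> ~~ in_neg (p (a, t)).1 -> c' (a, t) = b -> b != col d1 -> b != col d2 ->
    col d1 != col d2 -> injective (fun i => c' (a, i)).
  move=> a t b d1 d2 na m1 m2 n12 npt ct bd1 bd2 cd12.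
  have [h1 q1] := mi _ _ m1; have [h2 q2] := mi _ _ m2.
  have pd1 : p d1 = (a, (p d1).2) by rewrite -q1 -surjective_pairing.
  have pd2 : p d2 = (a, (p d2).2) by rewrite -q2 -surjective_pairing.
  have cd1 : c' (a, (p d1).2) = col d1 by rewrite -pd1 cpv // q1.
  have cd2 : c' (a, (p d2).2) = col d2 by rewrite -pd2 cpv // q2.
  apply: (@inj3f _ t (p d1).2 (p d2).2) => /=; rewrite ?ct ?cd1 ?cd2 //.
  - apply/eqP => et; move: npt; by rewrite et -pd1 pinv h1.
  - apply/eqP => et; move: npt; by rewrite et -pd2 pinv h2.
  - apply/eqP => et; move: n12; by rewrite -(pinv d1) -(pinv d2) pd1 pd2 et eqxx.
have hi1 : i1 \in semiedges_at u by rewrite eu set21.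
have hi2 : i2 \in semiedges_at u by rewrite eu set22.
have ho1 : o1 \in semiedges_at v by rewrite eo set21.
have ho2 : o2 \in semiedges_at v by rewrite eo set22.
have hr : r \in semiedges_at w by rewrite ew set11.
exists c'; split.
  move=> d; rewrite /c' pinv.
  case h1: (in_neg d.1); case h2: (in_neg (p d).1) => //; first by rewrite hcol.
  by rewrite orbC.
move=> x hx; case: (boolP (in_neg x)) => hin.
  move=> a b /= E; apply: (hinj x hin hx); move: E; by rewrite /c' /= hin.
case: (nin x hin) => ->.
- apply: (two u iu al i1 i2) => //; first by rewrite euw.
  by rewrite /c' /= (negbTE nu') euw /= (negbTE nw') eqxx.
- have [hr1 qr] := mi _ _ hr.
  have pr : p r = (w, (p r).2) by rewrite -qr -surjective_pairing.
  have cr : c' (w, (p r).2) = col r by rewrite -pr cpv // qr.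
  have cj : c' (w, j) = al by rewrite /c' /= (negbTE nw') ewu /= (negbTE nu') eqxx orbT.
  have cj' : c' (w, j') = be.
    by rewrite /c' /= (negbTE nw') ewv /= (negbTE nv') eq_sym (negbTE uw) eq_sym (negbTE uv).
  apply: (@inj3f _ j j' (p r).2) => /=; rewrite ?cr ?cj ?cj' //.
  + apply/eqP => ejj; move: uv; by rewrite -[u]/((u, iu).1) -ewu ejj ewv eqxx.
  + apply/eqP => ej; move: hr1; by rewrite -(pinv r) pr -ej ewu /= (negbTE nu').
  + apply/eqP => ej; move: hr1; by rewrite -(pinv r) pr -ej ewv /= (negbTE nv').
- apply: (two v k be o1 o2) => //; first by rewrite evw.
  by rewrite /c' /= (negbTE nv') evw /= (negbTE nw') eq_sym (negbTE uv) eq_sym (negbTE uw).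
Qed.

Lemma semi_neq (N : negator) (a b : nV N) d1 d2 :
  d1 \in semiedges_at a -> d2 \in semiedges_at b -> a != b -> d1 != d2.
Proof.
rewrite !inE => /andP[_ /eqP q1] /andP[_ /eqP q2] ab.
by apply/eqP => e; move: ab; rewrite -q1 -q2 e eqxx.
Qed.

Lemma side_parity (N Np Nn : negator) (GV : finType) (pG : GV * 'I_3 -> GV * 'I_3)
  (inj : surv N -> GV) (injp : surv Np -> GV) (injn : surv Nn -> GV) (z : GV)
  (c : GV * 'I_3 -> 'I_3) S i1 i2 o1 o2 r :
  is_cubic (np N) -> uniq [:: nu N; nw N; nv N] ->
  semiedges_at (nu N) = [set i1; i2] -> i1 != i2 ->
  semiedges_at (nv N) = [set o1; o2] -> o1 != o2 ->
  semiedges_at (nw N) = [set r] ->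
  NNN_side pG inj injp injn z -> is_colouring_without pG S c -> (forall s, inj s \notin S) ->
  par [:: tcol inj c i1; tcol inj c i2; tcol inj c o1; tcol inj c o2; tcol inj c r].
Proof.
move=> [pinv pfix] U eu ni eo no ew side hcS hS.
have [hc _] := hcS.
set col := tcol inj c.
have hcol := side_int side hc.
set A := [set x : nV N | in_neg x].
have hpar := @parity _ _ col A pinv pfix.
have {}hpar : forall k, odd #|[set d | (d.1 \in A) && ((np N d).1 \notin A) && (col d == k)]| = odd #|A|.
  apply: hpar.
    by move=> d; rewrite !inE; exact: hcol.
  by move=> x; rewrite inE => hx; exact: (side_inj hcS (hS _)).
have [uw uv wv] : [/\ nu N != nw N, nu N != nv N & nw N != nv N].
  by move: U; rewrite /= !inE !negb_or => /and3P[/andP[h1 h2] h3 _]; split.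
have hi1 : i1 \in semiedges_at (nu N) by rewrite eu set21.
have hi2 : i2 \in semiedges_at (nu N) by rewrite eu set22.
have ho1 : o1 \in semiedges_at (nv N) by rewrite eo set21.
have ho2 : o2 \in semiedges_at (nv N) by rewrite eo set22.
have hr : r \in semiedges_at (nw N) by rewrite ew set11.
set L := [:: i1; i2; o1; o2; r].
have uL : uniq L.
  rewrite /= !inE !negb_or ni no.
  rewrite (semi_neq hi1 ho1 uv) (semi_neq hi1 ho2 uv) (semi_neq hi2 ho1 uv) (semi_neq hi2 ho2 uv).
  have vw : nv N != nw N by rewrite eq_sym.
  by rewrite (semi_neq hi1 hr uw) (semi_neq hi2 hr uw) (semi_neq ho1 hr vw) (semi_neq ho2 hr vw).
have memL : forall d, (d.1 \in A) && ((np N d).1 \notin A) = (d \in L).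
  move=> d.
  have -> : (d \in L) = [|| d \in [set i1; i2], d \in [set o1; o2] | d \in [set r]].
    by rewrite !inE !orbA.
  rewrite -eu -eo -ew !inE -!andb_orr; congr (_ && _).
  rewrite /in_neg negbK !inE.
  by case: (_ == nu N); case: (_ == nv N); case: (_ == nw N).
have cnt : forall k, #|[set d | (d.1 \in A) && ((np N d).1 \notin A) && (col d == k)]|
                     = count_mem k (map col L).
  move=> k; rewrite count_map -size_filter.
  move/card_uniqP: (filter_uniq (fun d => col d == k) uL) => <-; apply: eq_card => d.
  by rewrite inE mem_filter -memL andbC.
rewrite /par /pk (_ : [:: col i1; col i2; col o1; col o2; col r] = map col L) //.
by rewrite -!cnt !hpar !eqxx.
Qed.

Lemma negprop (N : negator) (col : nV N * 'I_3 -> 'I_3) i1 i2 o1 o2 r :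
  is_negator N ->
  semiedges_at (nu N) = [set i1; i2] -> i1 != i2 ->
  semiedges_at (nv N) = [set o1; o2] -> o1 != o2 ->
  semiedges_at (nw N) = [set r] ->
  (forall d, in_neg d.1 -> in_neg (np N d).1 -> col (np N d) = col d) ->
  (forall x, in_neg x -> injective (fun i => col (x, i))) ->
  par [:: col i1; col i2; col o1; col o2; col r] ->
  (col i1 == col i2) || (col o1 == col o2).
Proof.
move=> [[cub _ ncol] [[U auw awv] _]] eu ni eo no ew hcol hinj hp.
apply/negPn/negP => /norP [ci co].
have [al [be [h1 h2 h3 h4 [h5 h6 h7]]]] := F1 hp ci co.
exfalso; apply: ncol.
by apply: (@extend N set0 col i1 i2 o1 o2 r al be) => // x hx _; exact: hinj.
Qed.

Lemma core (A B C : negator) (GV : finType) (pG : GV * 'I_3 -> GV * 'I_3)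
  (injA : surv A -> GV) (injB : surv B -> GV) (injC : surv C -> GV) (z : GV)
  (c : GV * 'I_3 -> 'I_3) (S : {set GV}) (x y : nV A) :
  is_negator A -> is_negator B -> is_negator C -> is_cubic pG ->
  NNN_side pG injA injC injB z -> NNN_side pG injB injA injC z -> NNN_side pG injC injB injA z ->
  injective injA -> injective injB -> injective injC ->
  (forall sa sb, injA sa != injB sb) -> (forall sa sc, injA sa != injC sc) ->
  (forall sb sc, injB sb != injC sc) ->
  is_colouring_without pG S c ->
  (forall s, injB s \notin S) -> (forall s, injC s \notin S) -> z \notin S ->
  (forall s : surv A, val s != x -> val s != y -> injA s \notin S) ->
  colourable_without (np A) [set x; y].
Proof.
move=> nA nB nC [pinv pfix] sA sB sC iA iB iC dAB dAC dBC hcS hB hC hz hA.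
have [hc hcinj] := hcS.
have pinj : injective pG := inv_inj pinv.
have nA' := nA; have nB' := nB; have nC' := nC.
move: nA' nB' nC' => [[cubA _ _] [[UA auwA awvA] [cuA cvA cwA]]]
  [[cubB _ _] [[UB _ _] [cuB cvB cwB]]] [[cubC _ _] [[UC _ _] [cuC cvC cwC]]].
move/eqP/cards2P: cuA => [ia1 [ia2 [nia eIA]]].
move/eqP/cards2P: cvA => [oa1 [oa2 [noa eOA]]].
move/eqP/cards1P: cwA => [ra eRA].
move/eqP/cards2P: cuB => [ib1 [ib2 [nib eIB]]].
move/eqP/cards2P: cvB => [ob1 [ob2 [nob eOB]]].
move/eqP/cards1P: cwB => [rb eRB].
move/eqP/cards2P: cuC => [ic1 [ic2 [nic eIC]]].
move/eqP/cards2P: cvC => [oc1 [oc2 [noc eOC]]].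
move/eqP/cards1P: cwC => [rc eRC].
have parB := side_parity cubB UB eIB nib eOB nob eRB sB hcS hB.
have parC := side_parity cubC UC eIC nic eOC noc eRC sC hcS hC.
have hoa1 : oa1 \in semiedges_at (nv A) by rewrite eOA set21.
have hoa2 : oa2 \in semiedges_at (nv A) by rewrite eOA set22.
have hob1 : ob1 \in semiedges_at (nv B) by rewrite eOB set21.
have hob2 : ob2 \in semiedges_at (nv B) by rewrite eOB set22.
have hoc1 : oc1 \in semiedges_at (nv C) by rewrite eOC set21.
have hoc2 : oc2 \in semiedges_at (nv C) by rewrite eOC set22.
have hra : ra \in semiedges_at (nw A) by rewrite eRA set11.
have hrb : rb \in semiedges_at (nw B) by rewrite eRB set11.
have hrc : rc \in semiedges_at (nw C) by rewrite eRC set11.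
have jA := side_jun sA hc pinj iA hoa1 hoa2 noa eIB.
have jB := side_jun sB hc pinj iB hob1 hob2 nob eIC.
have jC := side_jun sC hc pinj iC hoc1 hoc2 noc eIA.
have [sra [ka [vsa pa ca]]] := side_r sA hc hra.
have [srb [kb [vsb pb cb]]] := side_r sB hc hrb.
have [src [kc [vsc pc cc]]] := side_r sC hc hrc.
have hzi := hcinj z hz.
have eAB : tcol injA c ra != tcol injB c rb.
  rewrite -ca -cb; apply/eqP => /hzi e; subst kb.
  by move: pa; rewrite -pb => /pinj [e _]; move: (dAB sra srb); rewrite e eqxx.
have eAC : tcol injA c ra != tcol injC c rc.
  rewrite -ca -cc; apply/eqP => /hzi e; subst kc.
  by move: pa; rewrite -pc => /pinj [e _]; move: (dAC sra src); rewrite e eqxx.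
have eBC : tcol injB c rb != tcol injC c rc.
  rewrite -cb -cc; apply/eqP => /hzi e; subst kc.
  by move: pb; rewrite -pc => /pinj [e _]; move: (dBC srb src); rewrite e eqxx.
have parA := chain jA jB jC eAB eAC eBC parB parC.
have ginj : forall (N : negator) (inj : surv N -> GV) x (h : in_neg x),
    (forall s, inj s \notin S) -> injective (fun i => tcol inj c (x, i)).
  by move=> N inj x' h hS; apply: (side_inj hcS (hS _)).
have ngB := negprop nB eIB nib eOB nob eRB (side_int sB hc) (fun x h => ginj _ _ x h hB) parB.
have ngC := negprop nC eIC nic eOC noc eRC (side_int sC hc) (fun x h => ginj _ _ x h hC) parC.
have fA := F2 parA; have fB := F2 parB; have fC := F2 parC.
have qA := paireq jA; have qB := paireq jB; have qC := paireq jC.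
have [nEA nFA] : tcol injA c ia1 != tcol injA c ia2 /\ tcol injA c oa1 != tcol injA c oa2.
  move: fA fB fC ngB ngC qA qB qC.
  move: (tcol injA c ia1 == _) (tcol injA c oa1 == _) (tcol injB c ib1 == _)
        (tcol injB c ob1 == _) (tcol injC c ic1 == _) (tcol injC c oc1 == _).
  by do 6!case.
have [al [be [h1 h2 h3 h4 [h5 h6 h7]]]] := F1 parA nEA nFA.
apply: (@extend A _ (tcol injA c) ia1 ia2 oa1 oa2 ra al be) => //.
  exact: (side_int sA hc).
move=> x' hx'; rewrite !inE negb_or => /andP[h8 h9].
by apply: (side_inj hcS); apply: hA.
Qed.

Unset Implicit Arguments.
Set Strict Implicit.

Theorem proposition11 (N1 N2 N3 : negator)
  (pG : nnnV N1 N2 N3 * 'I_3 -> nnnV N1 N2 N3 * 'I_3) :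
  is_negator N1 -> is_negator N2 -> is_negator N3 ->
  is_NNN pG -> bicritical pG ->
  [/\ bicritical_negator N1, bicritical_negator N2 & bicritical_negator N3].
Proof.
move=> n1 n2 n3 [cub s1 s2 s3 _] [_ hbic].
have i1 : injective (@inj1 N1 N2 N3) by move=> a b [].
have i2 : injective (@inj2 N1 N2 N3) by move=> a b [].
have i3 : injective (@inj3 N1 N2 N3) by move=> a b [].
have d12 : forall a b, @inj1 N1 N2 N3 a != inj2 b by [].
have d13 : forall a b, @inj1 N1 N2 N3 a != inj3 b by [].
have d23 : forall a b, @inj2 N1 N2 N3 a != inj3 b by [].
have d21 : forall a b, @inj2 N1 N2 N3 a != inj1 b by [].
have d31 : forall a b, @inj3 N1 N2 N3 a != inj1 b by [].
have d32 : forall a b, @inj3 N1 N2 N3 a != inj2 b by [].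
split => x y hx hy nxy.
- have ne : @inj1 N1 N2 N3 (exist _ x hx) != inj1 (exist _ y hy).
    by apply: contra nxy => /eqP /i1 [->].
  have [c hcS] := hbic _ _ ne.
  apply: (core n1 n2 n3 cub s1 s2 s3 i1 i2 i3 d12 d13 d23 hcS).
  + by move=> s; rewrite !inE.
  + by move=> s; rewrite !inE.
  + by rewrite !inE.
  + move=> s h1 h2; rewrite !inE negb_or; apply/andP; split.
      by apply: contra h1 => /eqP /i1 ->.
    by apply: contra h2 => /eqP /i1 ->.
- have ne : @inj2 N1 N2 N3 (exist _ x hx) != inj2 (exist _ y hy).
    by apply: contra nxy => /eqP /i2 [->].
  have [c hcS] := hbic _ _ ne.
  apply: (core n2 n3 n1 cub s2 s3 s1 i2 i3 i1 d23 d21 d31 hcS).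
  + by move=> s; rewrite !inE.
  + by move=> s; rewrite !inE.
  + by rewrite !inE.
  + move=> s h1 h2; rewrite !inE negb_or; apply/andP; split.
      by apply: contra h1 => /eqP /i2 ->.
    by apply: contra h2 => /eqP /i2 ->.
- have ne : @inj3 N1 N2 N3 (exist _ x hx) != inj3 (exist _ y hy).
    by apply: contra nxy => /eqP /i3 [->].
  have [c hcS] := hbic _ _ ne.
  apply: (core n3 n1 n2 cub s3 s1 s2 i3 i1 i2 d31 d32 d12 hcS).
  + by move=> s; rewrite !inE.
  + by move=> s; rewrite !inE.
  + by rewrite !inE.
  + move=> s h1 h2; rewrite !inE negb_or; apply/andP; split.
      by apply: contra h1 => /eqP /i3 ->.
    by apply: contra h2 => /eqP /i3 ->.
Qed.
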